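(* Let $T$ be a tree and let $F_1,F_2\in\mathcal S$ be substructures in $T$ sharing a common vertex $v$. Then $v\in X(F_1)$ if and only if $v\in X(F_2)$.
   Context: For a tree $T$, $S(T)$ is the tree obtained from $T$ by subdividing each edge exactly once. Let $\mathcal S=\{S(T): T \text{ a tree}\}$, and for $F=S(T)\in\mathcal S$ set $X(F)=V(T)$ (the non-subdivision vertices, called fixed-degree vertices); in particular $S(P_1)=P_1$ with $X(P_1)=V(P_1)$. A graph $F\in\mathcal S$ is a substructure in a graph $G$ if $F$ is a subgraph of $G$ and $\deg_G(v)=\deg_F(v)$ for every $v\in X(F)$. *)

(* Defs.v *)
(* Finite simple graphs as symmetric irreflexive relations on a finType. *)
From mathcomp Require Import all_boot.
Set Implicit Arguments. Unset Strict Implicit. Unset Printing Implicit Defensive.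

Definition deg (V : finType) (e : rel V) (v : V) : nat := #|[set w | e v w]|.

(* No cycle of length >= 3 (simple cycle x, p_1, ..., p_k, back to x). *)
Definition acyclic (V : finType) (e : rel V) : Prop :=
  forall (x : V) (p : seq V), path e x p -> uniq (x :: p) -> 2 <= size p ->
    ~~ e (last x p) x.

Definition is_tree (V : finType) (e : rel V) : Prop :=
  [/\ 0 < #|V|, symmetric e, irreflexive e,
      (forall x y, connect e x y) & acyclic e].

(* The subdivision S(T) of a graph T = (W, eW): vertex type W + {set W};
   inl x are the original (fixed-degree) vertices, inr s with s = {x,y}
   an edge of T is the subdivision vertex of that edge. *)
Definition sub_vert (W : finType) (eW : rel W) (u : W + {set W}) : bool :=
  match u with
  | inl _ => true
  | inr s => [exists x, exists y, eW x y && (s == [set x; y])]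
  end.

Definition sub_edge (W : finType) (eW : rel W) (u u' : W + {set W}) : bool :=
  match u, u' with
  | inl x, inr s => sub_vert eW (inr s) && (x \in s)
  | inr s, inl x => sub_vert eW (inr s) && (x \in s)
  | _, _ => false
  end.

Definition subgraph (V : finType) (e : rel V) (VF : {set V}) (eF : rel V) : Prop :=
  forall x y, eF x y -> [&& e x y, x \in VF & y \in VF].

(* The graph (VF, eF) belongs to the class S, i.e. is isomorphic to S(T') for
   a tree T', with X the image of V(T') (the fixed-degree vertices X(F)). *)
Definition in_S_with (V : finType) (VF : {set V}) (eF : rel V) (X : {set V}) : Prop :=
  exists (W : finType) (eW : rel W) (phi : W + {set W} -> V),
    [/\ is_tree eW,
        {in sub_vert eW &, injective phi},
        VF = [set phi u | u in [pred u | sub_vert eW u]],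
        (forall u u', sub_vert eW u -> sub_vert eW u' ->
            eF (phi u) (phi u') = sub_edge eW u u')
      & X = [set phi (inl x) | x : W]].

Definition substructure (V : finType) (e : rel V)
    (VF : {set V}) (eF : rel V) (X : {set V}) : Prop :=
  [/\ subgraph e VF eF, in_S_with VF eF X &
      forall v, v \in X -> deg e v = #|[set w in VF | eF v w]|].

(* Main.v *)
Require Import Defs.
From mathcomp Require Import all_boot.
Set Implicit Arguments. Unset Strict Implicit. Unset Printing Implicit Defensive.

Lemma sub_A (V : finType) (e : rel V) VF eF X a w :
  substructure e VF eF X -> a \in X -> e a w -> (w \in VF) && eF a w.
Proof.
case=> Hsub _ Hdeg aX ew.
have Hd := Hdeg a aX; rewrite /deg in Hd.
have Hs : [set w in VF | eF a w] \subset [set w | e a w].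
  apply/subsetP=> z; rewrite !inE => /andP[_ H]; by case/and3P: (Hsub _ _ H).
have : [set w in VF | eF a w] == [set w | e a w] by rewrite eqEcard Hs -Hd leqnn.
by move/eqP/setP/(_ w); rewrite !inE ew => ->.
Qed.

Lemma sub_B (V : finType) (e : rel V) VF eF X a :
  substructure e VF eF X -> a \in VF -> a \notin X ->
  exists b c, [/\ b != c, b \in X, c \in X, eF a b & eF a c].
Proof.
case=> _ [W [eW [phi [Htree Hinj HVF Hedge HX]]]] _ aVF aX.
move: aVF; rewrite HVF => /imsetP[u su Eu]; subst a.
case: u su aX => [x|s] su aX.
  by move: aX; rewrite HX => /negP; case; apply/imsetP; exists x.
case: Htree => _ _ Hirr _ _.
have su' : sub_vert eW (inr s) := su.
case/existsP: (su) => x /existsP[y /andP[exy /eqP sE]].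
have xy : x != y by apply/eqP => E; subst; rewrite Hirr in exy.
exists (phi (inl x)), (phi (inl y)); split.
- apply/eqP => E; have := Hinj (inl x) (inl y) isT isT E; case => E'.
  by rewrite E' eqxx in xy.
- by rewrite HX; apply/imsetP; exists x.
- by rewrite HX; apply/imsetP; exists y.
- by rewrite Hedge //=; apply/andP; split => //; rewrite sE !inE eqxx.
- by rewrite Hedge //=; apply/andP; split => //; rewrite sE !inE eqxx orbT.
Qed.

Lemma sub_C (V : finType) (e : rel V) VF eF X a b :
  substructure e VF eF X -> a \in X -> eF a b -> b \notin X.
Proof.
case=> Hsub [W [eW [phi [Htree Hinj HVF Hedge HX]]]] _ aX ab.
rewrite HX in aX *; case/imsetP: aX => x _ Ex; subst a.
apply/negP => /imsetP[z _ Ez].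
by rewrite Ez Hedge in ab.
Qed.

Lemma step (V : finType) (e : rel V) VF1 eF1 X1 VF2 eF2 X2 a :
  substructure e VF1 eF1 X1 -> substructure e VF2 eF2 X2 ->
  a \in X1 -> a \in VF2 -> a \notin X2 ->
  exists b c, [/\ b != c, e a b, e a c,
    [/\ b \in VF1, b \in VF2, b \notin X1 & b \in X2] &
    [/\ c \in VF1, c \in VF2, c \notin X1 & c \in X2]].
Proof.
move=> S1 S2 a1 aV2 a2.
have [b [c [bc bX cX ab ac]]] := sub_B S2 aV2 a2.
case: (S2) => Hsub2 _ _.
have /and3P[eab _ bV2] := Hsub2 _ _ ab.
have /and3P[eac _ cV2] := Hsub2 _ _ ac.
have /andP[bV1 ab1] := sub_A S1 a1 eab.
have /andP[cV1 ac1] := sub_A S1 a1 eac.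
have b1 := sub_C S1 a1 ab1.
have c1 := sub_C S1 a1 ac1.
by exists b, c; split.
Qed.

Lemma no_D (V : finType) (e : rel V) (D : pred V) :
  symmetric e -> irreflexive e -> acyclic e ->
  (forall a, D a -> exists b c, [/\ b != c, e a b, e a c, D b & D c]) ->
  forall a, ~~ D a.
Proof.
move=> Hsym Hirr Hac HD a0; apply/negP => Da0.
have ext : forall k, exists x p, [/\ D x, path e x p, uniq (x :: p) & size p = k].
  elim=> [|k [x [p [Dx Hp Hu Hs]]]]; first by exists a0, [::].
  have [b [c [bc eb ec Db Dc]]] := HD x Dx.
  have [y [Dy exy yh]] : exists y, [/\ D y, e x y & y != head x p].
    case: (eqVneq b (head x p)) => [Eb|nb]; last by exists b.
    by exists c; split => //; rewrite -Eb eq_sym.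
  case: (boolP (y \in x :: p)) => yin.
  - exfalso; rewrite in_cons in yin; case/orP: yin => [/eqP yx | yp].
      by rewrite yx Hirr in exy.
    move: Hp Hu yh Hs; case/splitPr: yp => p1 p2 Hp Hu yh _.
    case: p1 Hp Hu yh => [|z p1] Hp Hu yh; first by rewrite /= eqxx in yh.
    have P1 : path e x (rcons (z :: p1) y).
      by move: Hp; rewrite cat_path rcons_path => /andP[-> /= /andP[-> _]].
    have P2 : uniq (x :: rcons (z :: p1) y).
      move: Hu; rewrite -cats1 -!cat_cons !cat_uniq /= !orbF.
      by case/and3P => -> /norP[-> _] _.
    have P3 : 2 <= size (rcons (z :: p1) y) by rewrite size_rcons.
    have H := Hac x (rcons (z :: p1) y) P1 P2 P3.
    by rewrite last_rcons Hsym exy in H.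
  - exists y, (x :: p); split => //.
    + by rewrite /= Hsym exy Hp.
    + by rewrite cons_uniq yin Hu.
    + by rewrite /= Hs.
have [x [p [_ _ Hu Hs]]] := ext #|V|.
move/card_uniqP: Hu => Hc.
have := max_card (mem (x :: p)).
by rewrite Hc /= Hs ltnn.
Qed.

Theorem proposition4p4 (V : finType) (e : rel V) :
  is_tree e ->
  forall (VF1 : {set V}) (eF1 : rel V) (X1 : {set V})
         (VF2 : {set V}) (eF2 : rel V) (X2 : {set V}) (v : V),
    substructure e VF1 eF1 X1 -> substructure e VF2 eF2 X2 ->
    v \in VF1 -> v \in VF2 ->
    (v \in X1 <-> v \in X2).
Proof.
move=> Ht VF1 eF1 X1 VF2 eF2 X2 v S1 S2 v1 v2.
case: Ht => _ Hsym Hirr _ Hac.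
pose D := [pred a | [&& a \in VF1, a \in VF2 & (a \in X1) != (a \in X2)]].
have HD : forall a, D a -> exists b c, [/\ b != c, e a b, e a c, D b & D c].
  move=> a /and3P[a1 a2].
  case: (boolP (a \in X1)) => aX1; case: (boolP (a \in X2)) => aX2 //= _.
  - have [b [c [bc eb ec [b1 b2 b3 b4] [c1 c2 c3 c4]]]] := step S1 S2 aX1 a2 aX2.
    exists b, c; split => //=.
      by rewrite b1 b2 (negbTE b3) b4.
    by rewrite c1 c2 (negbTE c3) c4.
  - have [b [c [bc eb ec [b1 b2 b3 b4] [c1 c2 c3 c4]]]] := step S2 S1 aX2 a1 aX1.
    exists b, c; split => //=.
      by rewrite b1 b2 (negbTE b3) b4.
    by rewrite c1 c2 (negbTE c3) c4.
have := no_D Hsym Hirr Hac HD v.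
rewrite /= v1 v2 /= => /negPn/eqP ->.
by split.
Qed.
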